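(* Let $p\in(0,1)$ and $0<\alpha<\frac{p}{1-p}$. Let $E:\mathbb{R}_{\ge0}\to\mathbb{R}_{\ge0}$ be a proper error score such that the limits $\lim_{x\to\infty}\frac{E'(x)}{E(x)}$, $\lim_{x\to\infty}\frac{E(x)}{E(ax)}$ and $\lim_{x\to\infty}\frac{E'(x)}{E'(ax)}$ exist (in the extended reals) for every $a\in(0,1)$, and suppose there are constants $k,\nu>0$ with $E(x)\le k e^{-\nu x}$ for all $x\ge0$. Then $E$ is undulating (with respect to $p,\alpha$).
   Context: A proper error score is a function $E:\mathbb{R}_{\ge0}\to\mathbb{R}_{\ge0}$ that is twice differentiable, with $E(x)>0$ and $E'(x)<0$ for all $x\ge0$, $E(0)=c_0>0$, and $\lim_{x\to\infty}E(x)=0$. Given $p\in(0,1)$ and $0<\alpha<\frac{p}{1-p}$, an error score $E$ is undulating if there exist $z_1,z_2\in\mathbb{R}$ such that $\frac{E'(pm)}{E'(\alpha(1-p)m)}>\frac{\alpha(1-p)}{p}$ for all $m\ge 0$ with $m<z_1$, and $\frac{E'(pm)}{E'(\alpha(1-p)m)}<\frac{\alpha(1-p)}{p}$ for all $m>z_2$. *)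

(* Defs.v *)
From Stdlib Require Import Reals.
From Coquelicot Require Import Coquelicot.
Open Scope R_scope.

Definition has_deriv_nonneg (f : R -> R) (x l : R) : Prop :=
  filterlim (fun y => (f y - f x) / (y - x))
    (within (fun y => 0 <= y /\ y <> x) (locally x)) (locally l).

Definition proper_error_score (E E' : R -> R) : Prop :=
  (forall x, 0 <= x -> has_deriv_nonneg E x (E' x)) /\
  (exists E'' : R -> R, forall x, 0 <= x -> has_deriv_nonneg E' x (E'' x)) /\
  (forall x, 0 <= x -> 0 < E x) /\
  (forall x, 0 <= x -> E' x < 0) /\
  0 < E 0 /\
  is_lim E p_infty 0.

Definition undulating (p alpha : R) (E' : R -> R) : Prop :=
  exists z1 z2 : R,
    (forall m, 0 <= m -> m < z1 ->
        E' (p * m) / E' (alpha * (1 - p) * m) > alpha * (1 - p) / p) /\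
    (forall m, 0 <= m -> z2 < m ->
        E' (p * m) / E' (alpha * (1 - p) * m) < alpha * (1 - p) / p).

(* Main.v *)
Require Import Defs.
From Stdlib Require Import Reals Lra.
From Coquelicot Require Import Coquelicot.
Open Scope R_scope.

Lemma deriv_pos (f : R -> R) x l : 0 < x -> has_deriv_nonneg f x l -> is_derive f x l.
Proof.
intros Hx H. apply is_derive_Reals. intros eps Heps.
assert (Hb := H (ball l (mkposreal eps Heps)) (locally_ball _ _)).
destruct Hb as [d Hd].
assert (Hm : 0 < Rmin d x) by (apply Rmin_pos; [apply cond_pos|lra]).
exists (mkposreal _ Hm). intros h Hh Hh2. simpl in Hh2.
assert (Hd1 : ball x d (x+h)).
{ unfold ball; simpl; unfold AbsRing_ball, abs, minus, plus, opp; simpl.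
  replace (x + h + - x) with h by ring. pose proof (Rmin_l d x); lra. }
assert (Hd2 : 0 <= x + h /\ x + h <> x).
{ pose proof (Rmin_r d x). split; [|lra]. apply Rabs_def2 in Hh2. lra. }
specialize (Hd _ Hd1 Hd2). revert Hd.
unfold ball; simpl; unfold AbsRing_ball, abs, minus, plus, opp; simpl.
replace (x + h - x) with h by ring. auto.
Qed.

Lemma no_slow (E E' : R->R) c k nu X0 : 0<c<1 -> proper_error_score E E' -> 0<k -> 0<nu ->
  (forall x, 0<=x -> E x <= k*exp(-nu*x)) ->
  (forall x, X0 < x -> E' x / E' (c*x) > c/2) -> False.
Proof.
intros Hc [HD [_ [Hpos [Hneg [_ Hlim]]]]] Hk Hnu Hexp Hr.
set (X1 := Rmax X0 1).
assert (HX1 : X0 <= X1 /\ 1 <= X1) by (split; [apply Rmax_l|apply Rmax_r]).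
assert (S1 : forall y, X1 < y -> c/2 * E'(c*y) - E' y > 0).
{ intros y Hy. assert (Hcy : 0 < c*y) by nra.
  pose proof (Hneg _ (Rlt_le _ _ Hcy)) as Hn.
  pose proof (Hr y ltac:(lra)) as Hry.
  set (r := E' y / E' (c*y)) in *.
  assert (E' y = r * E' (c*y)) by (unfold r; field; lra). nra. }
assert (S2 : forall y, X1 < y ->
   is_derive (fun y => E (c*y)/2 - E y) y (c/2 * E'(c*y) - E' y)).
{ intros y Hy. assert (Hcy : 0 < c*y) by nra.
  assert (D1 : is_derive E (c*y) (E' (c*y))) by (apply deriv_pos; auto; apply HD; lra).
  assert (D2 : is_derive E y (E' y)) by (apply deriv_pos; [lra|apply HD; lra]).
  assert (D3 : is_derive (fun t => c*t) y c).
  { assert (H0 : is_derive (fun t => c*t) y (c*1)).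
    { apply is_derive_scal. apply (is_derive_id y). }
    rewrite Rmult_1_r in H0. exact H0. }
  pose proof (is_derive_comp E (fun t => c*t) y _ _ D1 D3) as D4.
  pose proof (is_derive_scal _ _ (/2) _ D4) as D5.
  pose proof (is_derive_minus _ _ _ _ _ D5 D2) as D6.
  assert (Heq : minus (/2 * scal c (E'(c*y))) (E' y) = c/2*E'(c*y) - E' y).
  { unfold minus, plus, opp, scal; simpl. unfold mult; simpl. field. }
  rewrite <- Heq.
  eapply is_derive_ext; [|apply D6].
  intros t; simpl. unfold minus, plus, opp; simpl. field. }
assert (S3 : forall y, X1 < y -> E (c*y) <= 2 * E y).
{ intros y0 Hy0. destruct (Rle_or_lt (E (c*y0)) (2 * E y0)) as [h|h]; [auto|exfalso].
  set (eps := (E (c*y0)/2 - E y0)).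
  assert (Heps : 0 < eps) by (unfold eps; lra).
  apply is_lim_spec in Hlim. destruct (Hlim (mkposreal eps Heps)) as [M HM].
  simpl in HM.
  set (y := Rmax y0 (M/c) + 1).
  assert (Hyy : y0 < y) by (unfold y; pose proof (Rmax_l y0 (M/c)); lra).
  assert (HyM : M < c * y).
  { unfold y. pose proof (Rmax_r y0 (M/c)). 
    assert (M/c * c = M) by (field; lra). nra. }
  specialize (HM _ HyM).
  assert (Hinc := incr_function (fun y => E (c*y)/2 - E y) (Finite X1) p_infty
     (fun y => c/2 * E'(c*y) - E' y)
     (fun x h1 _ => S2 x h1) (fun x h1 _ => S1 x h1) y0 y Hy0 Hyy I).
  simpl in Hinc. rewrite Rminus_0_r in HM. apply Rabs_def2 in HM.
  assert (0 < E y) by (apply Hpos; lra). unfold eps in *. lra. }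
set (d := / c).
assert (Hd : 1 < d) by (unfold d; rewrite <- Rinv_1; apply Rinv_lt_contravar; lra).
set (X := X1 + 1 + 2 / (nu * (d - 1))).
assert (HXa : 0 < 2 / (nu * (d-1))) by (apply Rdiv_lt_0_compat; nra).
assert (HX1X : X1 < X) by (unfold X; lra).
assert (HX2 : 2 <= nu * X * (d-1)).
{ assert (nu * (2/(nu*(d-1))) * (d-1) = 2) by (field; lra).
  unfold X. nra. }
assert (S5 : forall n, E X <= 2^n * E (X * d^n)).
{ induction n. simpl. rewrite Rmult_1_r. lra.
  assert (H1 := pow_R1_Rle d (S n) ltac:(lra)).
  assert (Hc' : c * (X * d ^ S n) = X * d^n) by (simpl; unfold d; field; lra).
  assert (HH := S3 (X * d ^ S n) ltac:(nra)). rewrite Hc' in HH.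
  replace (2^S n) with (2*2^n) by (simpl; ring). assert (0<2^n) by (apply pow_lt; lra). nra. }
assert (He2 : exp (-2) <= /4).
{ replace (-2) with (- (2)) by ring. rewrite exp_Ropp. apply Rinv_le_contravar. lra.
  assert (H1 := exp_ineq1 1 ltac:(lra)).
  replace 2 with (1+1) by ring. rewrite exp_plus. nra. }
assert (S6 : forall n, exp (-nu*(X*d^n)) <= (/4)^n * exp(-nu*X)).
{ induction n. simpl. rewrite Rmult_1_r. lra.
  assert (H1 := pow_R1_Rle d n ltac:(lra)).
  replace (-nu*(X*d^S n)) with (-nu*(X*d^n) + - (nu*X*(d-1)*d^n)) by (simpl; ring).
  rewrite exp_plus.
  assert (exp (- (nu*X*(d-1)*d^n)) <= exp (-2)).
  { assert (Ha : 2 <= nu*X*(d-1)*d^n) by nra.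
    destruct (Rle_lt_or_eq_dec _ _ Ha) as [e|e].
    left; apply exp_increasing. lra. right; f_equal; lra. }
  assert (0 < exp (-nu*(X*d^n))) by apply exp_pos.
  simpl. nra. }
assert (HEX : 0 < E X) by (apply Hpos; lra).
destruct (pow_lt_1_zero (/2) ltac:(rewrite Rabs_pos_eq; lra) (E X / k)
   ltac:(apply Rdiv_lt_0_compat; lra)) as [N HN].
specialize (HN N (le_n N)). rewrite Rabs_pos_eq in HN by (apply pow_le; lra).
assert (H5 := S5 N). assert (H6 := S6 N).
assert (H7 := Hexp (X * d^N) ltac:(pose proof (pow_R1_Rle d N ltac:(lra)); nra)).
assert (exp (-nu*X) <= 1) by (rewrite <- exp_0; destruct (Req_dec X 0); [subst; lra|left; apply exp_increasing; nra]).
assert (Hp : 2^N * (/4)^N = (/2)^N) by (rewrite <- Rpow_mult_distr; f_equal; field).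
assert (0 < 2^N) by (apply pow_lt; lra).
assert (0 <= (/4)^N) by (apply pow_le; lra).
assert (E X <= k * (/2)^N).
{ apply Rle_trans with (2^N * E (X*d^N)); auto.
  apply Rle_trans with (2^N * (k * ((/4)^N * exp(-nu*X)))).
  apply Rmult_le_compat_l; [lra|]. apply Rle_trans with (1 := H7). apply Rmult_le_compat_l; lra.
  rewrite <- Hp. assert (0 <= k*2^N*(/4)^N) by (apply Rmult_le_pos; nra). nra. }
assert (E X / k * k = E X) by (field; lra). nra.
Qed.

Theorem corollary1 (p alpha : R) (E E' : R -> R)
  (hp : 0 < p < 1)
  (halpha : 0 < alpha < p / (1 - p))
  (hE : proper_error_score E E')
  (hlim1 : exists l : Rbar, is_lim (fun x => E' x / E x) p_infty l)
  (hlim2 : forall a, 0 < a < 1 ->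
     exists l : Rbar, is_lim (fun x => E x / E (a * x)) p_infty l)
  (hlim3 : forall a, 0 < a < 1 ->
     exists l : Rbar, is_lim (fun x => E' x / E' (a * x)) p_infty l)
  (hexp : exists k nu : R, 0 < k /\ 0 < nu /\
     forall x, 0 <= x -> E x <= k * exp (- nu * x)) :
  undulating p alpha E'.
Proof.
destruct hexp as [k [nu [Hk [Hnu Hx]]]].
set (c := alpha * (1-p) / p).
assert (Hc1 : alpha * (1-p) < p).
{ assert (alpha * (1-p) < p/(1-p) * (1-p)) by (apply Rmult_lt_compat_r; lra).
  replace (p/(1-p)*(1-p)) with p in H by (field; lra). lra. }
assert (Hc : 0 < c < 1).
{ unfold c; split. apply Rdiv_lt_0_compat; nra.
  apply Rmult_lt_reg_r with p; [lra|]. unfold Rdiv. rewrite Rmult_assoc, Rinv_l; lra. }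
assert (HM : exists M, forall x, M < x -> E' x / E' (c*x) < c).
{ destruct (hlim3 c Hc) as [L HL]. apply is_lim_spec in HL.
  destruct L as [l| |]; simpl in HL.
  - destruct (Rlt_or_le l c) as [h|h].
    + assert (He : 0 < c - l) by lra.
      destruct (HL (mkposreal _ He)) as [M HM]. exists M. intros x Hx'.
      specialize (HM x Hx'). simpl in HM. apply Rabs_def2 in HM. lra.
    + assert (He : 0 < c/2) by lra.
      destruct (HL (mkposreal _ He)) as [M HM]. exfalso.
      apply (no_slow E E' c k nu M Hc hE Hk Hnu Hx).
      intros x Hx'. specialize (HM x Hx'). simpl in HM. apply Rabs_def2 in HM. lra.
  - destruct (HL (c/2)) as [M HM]. exfalso.
    apply (no_slow E E' c k nu M Hc hE Hk Hnu Hx). intros x Hx'. specialize (HM x Hx'). lra.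
  - destruct (HL c) as [M HM]. exists M. exact HM. }
destruct HM as [M HM].
exists 0, (M/p). split.
- intros m H0 H1. lra.
- intros m _ Hm. assert (Hpm : M < p*m).
  { apply Rmult_lt_compat_l with (r := p) in Hm; [|lra].
    replace (p*(M/p)) with M in Hm by (field; lra). lra. }
  specialize (HM _ Hpm).
  replace (alpha*(1-p)*m) with (c*(p*m)) by (unfold c; field; lra).
  fold c. exact HM.
Qed.
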